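(* For $0\le r_1,r_2\le n$ and $0\le s\le N(r_1,r_2)$, $$\lambda_s^{r_1,r_2}(r_2)=(-1)^s\frac{[r_1]_s}{[n-r_1]_s},\qquad \lambda_s^{r_1,r_2}(r_2-r_1)=\frac{[r_1]_s\,[n-r_2]_s}{[n-r_1]_s\,[r_2]_s}.$$
   Context: Let $\Omega$ be a finite set with $|\Omega|=n\ge1$, $G=S(\Omega)$, $X=\mathcal P(\Omega)$, $X_r=\{x\in X:|x|=r\}$, $G$ acting on $L^2(X)$ (complex functions on $X$; $L^2(X_r)$ = functions supported on $X_r$) by $(\rho(g)\psi)(x)=\psi(g^{-1}x)$. For $0\le s\le\min(r,n-r)$, $L^2(X_r)_s$ is the unique irreducible $G$-subspace of $L^2(X_r)$ isomorphic to the irreducible representation associated with the partition $(n-s,s)$. $N(r_1,r_2)=\min(r_1,n-r_1,r_2,n-r_2)$. For $0\le s\le N(r_1,r_2)$, $\Lambda_s^{r_1,r_2}$ is a $G$-equivariant map $L^2(X)\to L^2(X)$ sending $L^2(X_{r_1})_s$ into $L^2(X_{r_2})_s$ and vanishing on its orthogonal complement, with kernel $\lambda$ defined on integers $\max(0,r_2-r_1)\le k\le\min(n-r_1,r_2)$ by $(\Lambda_s^{r_1,r_2}\psi)(x_2)=\sum_{x_1\in X_{r_1}}\lambda(|x_2\setminus x_1|)\psi(x_1)$. The kernel agrees on its domain with a unique polynomial of degree $s$ which is nonzero at $0$; $\Lambda_s^{r_1,r_2}$ is normalized so that this polynomial takes the value $1$ at $t=0$, and $\lambda_s^{r_1,r_2}(t)$,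 $t\in\mathbb C$, denotes this polynomial. $[\alpha]_k=\alpha(\alpha-1)\cdots(\alpha-k+1)$. *)

(* Defs.v *)
From mathcomp Require Import all_boot all_order all_algebra all_fingroup.
Set Implicit Arguments. Unset Strict Implicit. Unset Printing Implicit Defensive.
Import GRing.Theory Num.Theory.
Local Open Scope ring_scope.

(* Omega = 'I_n, X = P(Omega) = {set 'I_n}, G = S(Omega) = {perm 'I_n},
   L^2(X) = complex functions on X, here {ffun {set 'I_n} -> C}
   with C any numeric closed field (e.g. the complex numbers). *)
Notation L2 C n := {ffun {set 'I_n} -> C}.

Section Defs.
Variables (C : numClosedFieldType) (n : nat).

Definition fzero : L2 C n := [ffun _ => 0].
Definition fadd (f g : L2 C n) : L2 C n := [ffun x => f x + g x].
Definition fscale (a : C) (f : L2 C n) : L2 C n := [ffun x => a * f x].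

Definition dotL2 (f g : L2 C n) : C := \sum_(x : {set 'I_n}) f x * (g x)^*.

Definition rho (g : {perm 'I_n}) (psi : L2 C n) : L2 C n :=
  [ffun x : {set 'I_n} => psi ((g^-1)%g @: x)].

Definition is_linear (f : L2 C n -> L2 C n) : Prop :=
  forall (a : C) (u v : L2 C n), f (fadd (fscale a u) v) = fadd (fscale a (f u)) (f v).

Definition G_equivariant (f : L2 C n -> L2 C n) : Prop :=
  forall (g : {perm 'I_n}) psi, f (rho g psi) = rho g (f psi).

Definition is_subspace (V : L2 C n -> Prop) : Prop :=
  [/\ V fzero, forall u v, V u -> V v -> V (fadd u v)
    & forall a u, V u -> V (fscale a u)].

Definition G_invariant (V : L2 C n -> Prop) : Prop :=
  forall g psi, V psi -> V (rho g psi).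

Definition G_subspace (V : L2 C n -> Prop) : Prop := is_subspace V /\ G_invariant V.

Definition G_irreducible (V : L2 C n -> Prop) : Prop :=
  [/\ G_subspace V, exists2 u, V u & u <> fzero
    & forall W, G_subspace W -> (forall u, W u -> V u) ->
         (forall u, W u -> u = fzero) \/ (forall u, V u -> W u)].

Definition L2r (r : nat) (psi : L2 C n) : Prop :=
  forall x : {set 'I_n}, #|x| <> r -> psi x = 0.

Definition span (P : L2 C n -> Prop) (psi : L2 C n) : Prop :=
  forall W, is_subspace W -> (forall u, P u -> W u) -> W psi.

(* Polytabloids of shape (n-s,s): a tableau with columns (a_i over b_i), i < s,
   (all 2s entries distinct) gives
   e_t = sum over the column group of sign * {sigma t}; a tabloid of shape
   (n-s,s) is identified with its second row, an s-subset of Omega. *)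
Definition polytabloid (s : nat) (a b : 'I_s -> 'I_n) : L2 C n :=
  \big[fadd/fzero]_(eps : {ffun 'I_s -> bool})
     fscale ((-1) ^+ #|[set i | eps i]|)
       [ffun x : {set 'I_n} => if x == [set (if eps i then a i else b i) | i : 'I_s] then 1 else 0].

Definition two_row_tableau (s : nat) (a b : 'I_s -> 'I_n) : Prop :=
  [/\ injective a, injective b & forall i j, a i <> b j].

(* The Specht module S^{(n-s,s)}, realized inside L^2(X_s) (= the permutation
   module M^{(n-s,s)}, with the same action rho). *)
Definition specht (s : nat) : L2 C n -> Prop :=
  span (fun u => exists a b, two_row_tableau a b /\ u = @polytabloid s a b).

Definition G_isomorphic (V W : L2 C n -> Prop) : Prop :=
  exists phi : L2 C n -> L2 C n,
    [/\ is_linear phi, G_equivariant phi,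
        forall u, V u -> W (phi u),
        forall u, V u -> phi u = fzero -> u = fzero
      & forall w, W w -> exists2 u, V u & phi u = w].

(* V is "L^2(X_r)_s": an irreducible G-subspace of L^2(X_r) isomorphic to the
   irreducible representation associated with the partition (n-s,s). *)
Definition is_L2rs (r s : nat) (V : L2 C n -> Prop) : Prop :=
  [/\ G_irreducible V, forall u, V u -> L2r r u & G_isomorphic V (specht s)].

Definition orth (V : L2 C n -> Prop) (psi : L2 C n) : Prop :=
  forall u, V u -> dotL2 psi u = 0.

End Defs.

Definition Nbound (n r1 r2 : nat) : nat :=
  minn (minn r1 (n - r1)) (minn r2 (n - r2)).

Definition ffact (R : pzRingType) (alpha : R) (k : nat) : R :=
  \prod_(i < k) (alpha - i%:R).

(* Lambda is a Lambda_s^{r1,r2} with normalized kernel polynomial p = lambda_s^{r1,r2} *)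
Definition is_Lambda (C : numClosedFieldType) (n r1 r2 s : nat)
    (V1 V2 : L2 C n -> Prop) (Lam : L2 C n -> L2 C n) (p : {poly C}) : Prop :=
  [/\ is_linear Lam, G_equivariant Lam,
      (forall psi, V1 psi -> V2 (Lam psi)) /\
      (forall psi, orth V1 psi -> Lam psi = fzero C n),
      (forall psi (x2 : {set 'I_n}), #|x2| = r2 ->
        Lam psi x2 = \sum_(x1 : {set 'I_n} | #|x1| == r1) p.[(#|x2 :\: x1|)%:R] * psi x1)
    & size p = s.+1 /\ p.[0] = 1].

(* Main.v *)
Require Import Defs.
From mathcomp Require Import all_boot all_order all_algebra all_fingroup.
From mathcomp Require Import zify ring.
Import GRing.Theory Num.Theory.
Local Open Scope ring_scope.
Local Open Scope ring_scope.

Section Comb.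
Local Open Scope nat_scope.
Variable n : nat.
Implicit Types A B x w Y Z D : {set 'I_n}.

Lemma disjP A B : reflect (forall j, j \in A -> j \notin B) [disjoint A & B].
Proof.
rewrite disjoint_subset; apply: (iffP subsetP) => H j /H //.
Qed.

Lemma cardsU_disj A B : [disjoint A & B] -> #|A :|: B| = #|A| + #|B|.
Proof. by move=> d; rewrite cardsU disjoint_setI0 // cards0 subn0. Qed.

Lemma cardC' A : #|~: A| = n - #|A|.
Proof. have := cardsC A; rewrite card_ord; lia. Qed.

Lemma count_AB A B (r : nat) : [disjoint A & B] ->
  #|[set x : {set 'I_n} | (#|x| == r) && (A \subset x) && [disjoint x & B]]| =
  if #|A| <= r then 'C(n - #|A| - #|B|, r - #|A|) else 0.
Proof.
move=> dAB; case: leqP => hA; last first.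
  apply: eq_card0 => x; rewrite !inE.
  apply/negP => /andP[/andP[/eqP hx sub] _].
  by move: (subset_leq_card sub); rewrite hx leqNgt hA.
set U := ~: (A :|: B).
have cU : #|U| = n - #|A| - #|B| by rewrite cardC' cardsU_disj // subnDA.
rewrite -cU -cards_draws.
have injf : {in [set w : {set 'I_n} | w \subset U & #|w| == r - #|A|] &, injective (fun w => A :|: w)}.
  move=> w1 w2; rewrite !inE => /andP[s1 _] /andP[s2 _] e.
  apply/setP => j; have := congr1 (fun X : {set 'I_n} => j \in X) e => /=; rewrite !inE.
  case jA: (j \in A) => //= _.
  have h1 := subsetP s1 j; have h2 := subsetP s2 j.
  by apply/idP/idP => [/h1|/h2]; rewrite !inE jA.
rewrite -(card_in_imset injf); apply: eq_card => x.
rewrite !inE; apply/idP/imsetP.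
- move=> /andP[/andP[/eqP hx sAx] dxB]; exists (x :\: A).
    rewrite !inE; apply/andP; split.
      apply/subsetP => j; rewrite !inE => /andP[jA jx]; rewrite (negbTE jA) /=.
      by move/disjP: dxB => /(_ j jx).
    by rewrite cardsD (setIidPr sAx) hx.
  apply/setP => j; rewrite !inE; case jA: (j \in A) => //=.
  by rewrite (subsetP sAx j jA).
- move=> [w]; rewrite !inE => /andP[sw /eqP cw] ->.
  have dAw : [disjoint A & w].
    apply/disjP => j jA; apply/negP => jw; have := subsetP sw j jw.
    by rewrite !inE jA.
  rewrite cardsU_disj // cw subnKC // eqxx subsetUl /=.
  apply/disjP => j; rewrite !inE => /orP[jA|jw].
    by move/disjP: dAB => /(_ j jA).
  by have := subsetP sw j jw; rewrite !inE negb_or => /andP[].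
Qed.

Lemma interZ x Z Y : Y \subset Z ->
  (x :&: Z == Y) = (Y \subset x) && [disjoint x & Z :\: Y].
Proof.
move=> sYZ; apply/eqP/andP => [e|[sYx dx]].
  split; first by rewrite -e subsetIl.
  apply/disjP => j jx; rewrite !inE; apply/negP => /andP[jY jZ].
  by move: jY; rewrite -e !inE jx jZ.
apply/setP => j; rewrite !inE; apply/andP/idP => [[jx jZ]|jY].
  apply: contraT => jY; by move/disjP: dx => /(_ j jx); rewrite !inE jY jZ.
by rewrite (subsetP sYx j jY) (subsetP sYZ j jY).
Qed.

Lemma sum_binom (X0 : {set 'I_n}) Z Y (r i : nat) : [disjoint X0 & Z] -> Y \subset Z ->
  \sum_(x : {set 'I_n} | (#|x| == r) && (x :&: Z == Y)) 'C(#|x :&: X0|, i) =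
  'C(#|X0|, i) * (if #|Y| + i <= r then 'C(n - #|Z| - i, r - #|Y| - i) else 0).
Proof.
move=> dX0Z sYZ.
under eq_bigr => x _ do rewrite -cards_draws -sum1_card.
rewrite (exchange_big_dep (fun D : {set 'I_n} => (D \subset X0) && (#|D| == i))) /=; last first.
  move=> x D _; rewrite inE => /andP[sD ->]; rewrite andbT.
  by apply: subset_trans sD (subsetIr _ _).
set c := (if _ then _ else _).
transitivity (\sum_(D in [set D : {set 'I_n} | (D \subset X0) & #|D| == i]) c); last first.
  by rewrite sum_nat_const cards_draws mulnC.
apply: eq_big => D; first by rewrite inE.
move=> /andP[sDX0 /eqP cD].
have dDZ : [disjoint D & Z] by apply: disjointWl sDX0 dX0Z.
have dYD : [disjoint Y & D].
  by rewrite disjoint_sym; apply: disjointWr sYZ dDZ.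
have dAB : [disjoint Y :|: D & Z :\: Y].
  apply/disjP => j; rewrite !inE => /orP[jY|jD]; first by rewrite jY.
  by move/disjP: dDZ => /(_ j jD) /negbTE ->; rewrite andbF.
rewrite sum1_card.
transitivity #|[set x : {set 'I_n} | (#|x| == r) && (Y :|: D \subset x) && [disjoint x & Z :\: Y]]|.
  apply: eq_card => x; rewrite unfold_in /= !inE (interZ x Z Y sYZ) subUset subsetI sDX0 cD eqxx !andbT.
  by case: (_ == r); case: (Y \subset x); case: (D \subset x); case: [disjoint _ & _].
rewrite count_AB // cardsU_disj // cD cardsD (setIidPr sYZ).
have hY : #|Y| <= #|Z| by apply: subset_leq_card.
have hZ : #|Z| <= n by rewrite -[n in _ <= n]card_ord max_card.
rewrite /c; case: leqP => h; last by [].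
congr 'C(_, _); move: hY hZ; move: #|Y| #|Z| => a b; lia.
Qed.

End Comb.

Local Open Scope nat_scope.
Lemma bin_ffact_id T m i : i <= m -> m <= T ->
  'C(T - i, m - i) * T ^_ i = 'C(T, m) * m ^_ i.
Proof.
move=> him hmT.
have hiT : i <= T by apply: leq_trans him hmT.
have e1 := bin_fact (leq_sub2r i hmT).
have e2 := bin_fact hmT.
have e3 := ffact_fact hiT.
have e4 := ffact_fact him.
have e5 : T - i - (m - i) = T - m by lia.
rewrite e5 in e1.
apply/eqP; rewrite -(eqn_pmul2r (_ : 0 < (m - i)`! * (T - m)`!)); last first.
  by rewrite muln_gt0 !fact_gt0.
apply/eqP.
move: e1 e2 e3 e4.
move: ('C(T - i, m - i)) (T ^_ i) ('C(T, m)) (m ^_ i) ((m - i)`!) ((T - m)`!) ((T - i)`!) (T`!) (m`!).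
move=> A B Cc D F1 F2 F3 F4 F5 e1 e2 e3 e4.
rewrite -mulnA (mulnC B) mulnA e1 mulnC e3.
by rewrite -e2 -e4 -!mulnA; congr (_ * _); rewrite mulnA (mulnC D).
Qed.
Local Open Scope ring_scope.

Section Poly.
Variable C : numClosedFieldType.

Definition ffp (i : nat) : {poly C} := \prod_(0 <= j < i) ('X - (j%:R)%:P).

Lemma ffp_eval (k i : nat) : (ffp i).[k%:R] = (k ^_ i)%:R.
Proof.
elim: i => [|i IH]; first by rewrite /ffp big_geq // hornerC.
rewrite /ffp big_nat_recr //= hornerM -/(ffp i) IH hornerXsubC ffactnSr.
case: (leqP i k) => h; first by rewrite natrM natrB.
by rewrite ffact_small // mul0r mul0n.
Qed.

Lemma ffp_monic i : ffp i \is monic.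
Proof.
elim: i => [|i IH]; first by rewrite /ffp big_geq // monic1.
by rewrite /ffp big_nat_recr //= -/(ffp i) monicMl // monicXsubC.
Qed.

Lemma ffp_size i : size (ffp i) = i.+1.
Proof.
elim: i => [|i IH]; first by rewrite /ffp big_geq // size_poly1.
rewrite /ffp big_nat_recr //= -/(ffp i) size_mul ?IH ?size_XsubC.
- by rewrite /= addn2.
- by rewrite -size_poly_eq0 IH.
- by rewrite -size_poly_eq0 size_XsubC.
Qed.

Lemma ffp_basis N (q : {poly C}) : (size q <= N)%N ->
  exists g : nat -> C, q = \sum_(i < N) g i *: ffp i.
Proof.
elim: N q => [|N IH] q hq.
  by exists (fun _ => 0); rewrite big_ord0; apply/eqP; rewrite -size_poly_leq0.
set c := q`_N.
have hq' : (size (q - c *: ffp N)%R <= N)%N.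
  apply/leq_sizeP => j hj; rewrite coefB coefZ.
  case: (ltngtP j N) => [|hNj|->]; first by rewrite ltnNge hj.
  - have /leq_sizeP -> := hq; last by [].
    by have /leq_sizeP -> := (eq_leq (ffp_size N)); rewrite ?mulr0 ?subr0.
  - have := ffp_monic N; rewrite monicE /lead_coef ffp_size /= => /eqP ->.
    by rewrite mulr1 subrr.
have [g hg] := IH _ hq'.
exists (fun i => if i == N then c else g i).
rewrite big_ord_recr /= eqxx.
under eq_bigr => i _ do rewrite (ltn_eqF (ltn_ord i)).
by rewrite -hg subrK.
Qed.

Lemma prod_iota (F : nat -> C) (G : C -> C) s :
  \prod_(x <- [seq F y | y <- iota 0 s]) G x = \prod_(y < s) G (F y).
Proof. rewrite big_map; have -> : iota 0 s = index_iota 0 s by rewrite /index_iota subn0. by rewrite big_mkord. Qed.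

Lemma side (g : nat -> C) (s a w T : nat) : (s <= w)%N -> (w < T)%N ->
  (forall y, (y < s)%N ->
     (\sum_(i < s.+1) (g i * (a ^_ i)%:R / (T ^_ i)%:R) *: ffp i).[w%:R - y%:R] = 0) ->
  (\sum_(i < s.+1) g i *: ffp i).[a%:R] * \prod_(y < s) (- (w%:R - y%:R)) =
  \prod_(y < s) (T%:R - (w%:R - y%:R)) * (\sum_(i < s.+1) g i *: ffp i).[0].
Proof.
move=> hsw hwT hroot.
set R := \sum_(i < s.+1) (g i * (a ^_ i)%:R / (T ^_ i)%:R) *: ffp i.
set q := \sum_(i < s.+1) g i *: ffp i.
have Tne0 i : (i < s.+1)%N -> (T ^_ i)%:R != 0 :> C.
  by move=> hi; rewrite pnatr_eq0 -lt0n ffact_gt0; lia.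
have hRT : R.[T%:R] = q.[a%:R].
  rewrite !horner_sum; apply: eq_bigr => i _; rewrite !hornerZ !ffp_eval.
  by rewrite divfK // Tne0.
have hR0 : R.[0] = q.[0].
  rewrite !horner_sum; apply: eq_bigr => i _; rewrite !hornerZ.
  have e := ffp_eval 0 i; rewrite mulr0n in e; rewrite e.
  rewrite ffact0n; case: (nat_of_ord i) => [|j] /=; last by rewrite !mulr0.
  by rewrite !ffactn0 divr1 mulr1.
set rs0 := [seq w%:R - y%:R | y <- iota 0 s] : seq C.
set P := \prod_(x <- rs0) ('X - x%:P).
have sizeP : size P = s.+1 by rewrite size_prod_XsubC size_map size_iota.
have sizeR : (size R <= s.+1)%N.
  apply: leq_trans (size_sum _ _ _) _; apply/bigmax_leqP => i _.
  by apply: leq_trans (size_scale_leq _ _) _; rewrite ffp_size.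
set S := R.[T%:R] *: P - P.[T%:R] *: R.
have S0 : S = 0.
  apply/eqP; apply: contraT => Sn0.
  have := max_poly_roots (rs := T%:R :: rs0) Sn0.
  have -> : all (root S) (T%:R :: rs0).
    rewrite /= /root /S !hornerE mulrC subrr eqxx /=.
    apply/allP => x xin; rewrite !hornerE.
    have -> : P.[x] = 0 by apply/eqP; rewrite -/(root P x) root_prod_XsubC.
    move: xin => /mapP [y]; rewrite mem_iota add0n => /andP[_ hy] ->.
    by rewrite hroot // mulr0 mulr0 subrr.
  have -> : uniq (T%:R :: rs0).
    rewrite /= map_inj_in_uniq ?iota_uniq ?andbT.
      apply/mapP => [[y]]; rewrite mem_iota add0n => /andP[_ hy] /eqP.
      rewrite eq_sym subr_eq -natrD eqr_nat => /eqP; lia.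
    move=> y1 y2 _ _ e; apply/eqP; rewrite -(eqr_nat C) -eqr_opp.
    by rewrite (addrI _ e).
  move=> /(_ isT isT); rewrite /= size_map size_iota ltnNge.
  suff -> : (size S <= s.+1)%N by [].
  apply: leq_trans (size_polyD _ _) _; rewrite geq_max size_polyN.
  by rewrite !(leq_trans (size_scale_leq _ _)) // ?sizeP // (leq_trans sizeR).
have := congr1 (fun p => p.[0]) S0; rewrite /S !hornerE hRT hR0 => /eqP.
rewrite subr_eq0 => /eqP.
rewrite /P !horner_prod /rs0 !prod_iota.
under eq_bigr => y _ do rewrite hornerXsubC sub0r.
under [X in _ = X * _]eq_bigr => y _ do rewrite hornerXsubC.
by move=> ->; rewrite mulrC.
Qed.

Lemma sum_eval n (X0 Z Y : {set 'I_n}) (r N : nat) (g : nat -> C) :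
  [disjoint X0 & Z] -> Y \subset Z -> (#|Y| <= r)%N -> (r - #|Y| <= n - #|Z|)%N ->
  (N <= (n - #|Z|).+1)%N ->
  \sum_(x : {set 'I_n} | (#|x| == r) && (x :&: Z == Y))
      (\sum_(i < N) g i *: ffp i).[(#|x :&: X0|)%:R]
  = ('C(n - #|Z|, r - #|Y|))%:R *
    (\sum_(i < N) (g i * (#|X0| ^_ i)%:R / ((n - #|Z|) ^_ i)%:R) *: ffp i).[(r - #|Y|)%:R].
Proof.
move=> dX0Z sYZ hYr hmT hN.
under eq_bigr => x _ do rewrite horner_sum.
rewrite exchange_big /= horner_sum mulr_sumr; apply: eq_bigr => i _.
under eq_bigr => x _ do rewrite hornerZ ffp_eval.
rewrite -mulr_sumr hornerZ ffp_eval -natr_sum.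
under eq_bigr => x _ do rewrite -bin_ffact.
rewrite -big_distrl /= sum_binom // -bin_ffact.
have Tne0 : ((n - #|Z|) ^_ i)%:R != 0 :> C.
  by rewrite pnatr_eq0 -lt0n ffact_gt0; have := ltn_ord i; lia.
case: leqP => h.
  have E : ('C(n - #|Z| - i, r - #|Y| - i))%:R * ((n - #|Z|) ^_ i)%:R
         = ('C(n - #|Z|, r - #|Y|))%:R * ((r - #|Y|) ^_ i)%:R :> C.
    by rewrite -!natrM bin_ffact_id //; lia.
  rewrite !natrM -[('C(n - #|Z| - i, r - #|Y| - i))%:R](mulfK Tne0) E.
  ring.
rewrite (@ffact_small (r - #|Y|) i); last by lia.
by rewrite !muln0 !mulr0.
Qed.

End Poly.
Local Open Scope ring_scope.

Section Grp.
Set Implicit Arguments. Unset Strict Implicit.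
Variables (C : numClosedFieldType) (n : nat).

Lemma fsum_eval I (r : seq I) (P : pred I) (F : I -> L2 C n) x :
  (\big[@fadd C n/fzero C n]_(i <- r | P i) F i) x = \sum_(i <- r | P i) F i x.
Proof.
apply: (big_morph (fun f : L2 C n => f x)) => [f g|]; by rewrite ffunE.
Qed.

Definition Sset s (a b : 'I_s -> 'I_n) (e : {ffun 'I_s -> bool}) : {set 'I_n} :=
  [set (if e j then a j else b j) | j : 'I_s].
Arguments Sset {s}.

Definition flip s (i : 'I_s) (e : {ffun 'I_s -> bool}) : {ffun 'I_s -> bool} :=
  [ffun j => if j == i then ~~ e j else e j].
Arguments flip {s}.

Lemma flipK s (i : 'I_s) : involutive (flip i).
Proof.
move=> e; apply/ffunP => j; rewrite !ffunE; case: (j == i) => //; exact: negbK.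
Qed.

Definition sgn s (e : {ffun 'I_s -> bool}) : C := (-1) ^+ #|[set j | e j]|.
Arguments sgn {s}.

Lemma sgn_flip_aux s (i : 'I_s) (e : {ffun 'I_s -> bool}) : e i -> sgn e = - sgn (flip i e).
Proof.
move=> ei; rewrite /sgn (cardsD1 i [set j | e j]) inE ei.
have -> : [set j | e j] :\ i = [set j | flip i e j].
  by apply/setP => j; rewrite !inE ffunE; case: eqP => [->|]; rewrite ?ei.
by rewrite exprS mulN1r.
Qed.

Lemma sgn_flip s (i : 'I_s) (e : {ffun 'I_s -> bool}) : sgn (flip i e) = - sgn e.
Proof.
case ei: (e i); first by rewrite (sgn_flip_aux ei) opprK.
have fi : flip i e i by rewrite ffunE eqxx ei.
by rewrite (sgn_flip_aux fi) flipK.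
Qed.

Lemma tperm_S s (a b : 'I_s -> 'I_n) (i : 'I_s) (e : {ffun 'I_s -> bool}) : two_row_tableau a b ->
  (tperm (a i) (b i)) @: Sset a b e = Sset a b (flip i e).
Proof.
case=> ia ib dab; rewrite /Sset -imset_comp; apply: eq_imset => j /=.
rewrite ffunE; case: (eqVneq j i) => [->|ji].
  by case: (e i) => /=; rewrite ?tpermL ?tpermR.
have aji : a i != a j by apply: contra_neq ji => /ia ->.
have bji : b i != b j by apply: contra_neq ji => /ib ->.
case: (e j); rewrite tpermD //.
- by apply/eqP => /esym /dab.
- by apply/eqP => /dab.
Qed.

Lemma polytabloidE s (a b : 'I_s -> 'I_n) x :
  polytabloid C a b x = \sum_(e : {ffun 'I_s -> bool}) sgn e * (x == Sset a b e)%:R.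
Proof.
rewrite /polytabloid fsum_eval; apply: eq_bigr => e _; rewrite !ffunE.
by case: (x == _).
Qed.

Lemma rho_polytabloid s (a b : 'I_s -> 'I_n) (i : 'I_s) : two_row_tableau a b ->
  rho (tperm (a i) (b i)) (polytabloid C a b) = fscale (-1) (polytabloid C a b).
Proof.
move=> tab; apply/ffunP => x; rewrite !ffunE tpermV !polytabloidE mulr_sumr.
set t := tperm (a i) (b i).
have tt (X : {set 'I_n}) : t @: (t @: X) = X.
  by rewrite -imset_comp (eq_imset _ (tpermK _ _)) imset_id.
have E e : (t @: x == Sset a b e) = (x == Sset a b (flip i e)).
  by rewrite -(inj_eq (imset_inj (@perm_inj _ t))) tt tperm_S.
have Se e : sgn e = - sgn (flip i e) :> C by rewrite sgn_flip opprK.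
under eq_bigr => e _ do rewrite E Se.
rewrite (reindex_inj (can_inj (flipK i))) /=.
apply: eq_bigr => e _; rewrite flipK; ring.
Qed.

Section Lin.
Variable phi : L2 C n -> L2 C n.
Hypothesis lin : is_linear phi.

Lemma lin0 : phi (fzero C n) = fzero C n.
Proof.
have := lin 1 (fzero C n) (fzero C n).
have -> : fadd (fscale 1 (fzero C n)) (fzero C n) = fzero C n.
  by apply/ffunP => x; rewrite !ffunE mul1r addr0.
move/ffunP => H; apply/ffunP => x; have := H x; rewrite !ffunE mul1r => E.
by rewrite (addrI _ (etrans (addr0 _) E)).
Qed.

Lemma linD u v : phi (fadd u v) = fadd (phi u) (phi v).
Proof.
have := lin 1 u v.
have -> : fscale 1 u = u by apply/ffunP => x; rewrite !ffunE mul1r.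
have -> : fscale 1 (phi u) = phi u by apply/ffunP => x; rewrite !ffunE mul1r.
by [].
Qed.

Lemma linZ a u : phi (fscale a u) = fscale a (phi u).
Proof.
have := lin a u (fzero C n); rewrite lin0.
have -> : fadd (fscale a u) (fzero C n) = fscale a u by apply/ffunP => x; rewrite !ffunE addr0.
by move=> ->; apply/ffunP => x; rewrite !ffunE addr0.
Qed.

Lemma lin_inj (V : L2 C n -> Prop) : is_subspace V ->
  (forall u, V u -> phi u = fzero C n -> u = fzero C n) ->
  forall u1 u2, V u1 -> V u2 -> phi u1 = phi u2 -> u1 = u2.
Proof.
move=> [V0 VD VZ] inj u1 u2 V1 V2 e.
have Vd : V (fadd (fscale (-1) u1) u2) by apply: VD => //; apply: VZ.
have := inj _ Vd; rewrite linD linZ e => /(_ _) H.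
have : fadd (fscale (-1) u1) u2 = fzero C n.
  apply: H; apply/ffunP => x; rewrite !ffunE; ring.
move/ffunP => E; apply/ffunP => x; have := E x; rewrite !ffunE => /eqP.
by rewrite mulN1r addrC subr_eq0 => /eqP ->.
Qed.

End Lin.

Lemma orth_gen (V : L2 C n -> Prop) s : is_subspace V -> G_invariant V ->
  G_isomorphic V (@specht C n s) -> forall h : {set 'I_n} -> C,
  (forall a b : 'I_s -> 'I_n, two_row_tableau a b ->
     exists i, forall x : {set 'I_n}, h (tperm (a i) (b i) @: x) = h x) ->
  forall u, V u -> \sum_x u x * h x = 0.
Proof.
move=> Vsub VG [phi [lin eqv into inj surj]] h Hh.
have [V0 VD VZ] := Vsub.
pose P w := @specht C n s w /\ forall u, V u -> phi u = w -> \sum_x u x * h x = 0.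
suff HP : forall w, @specht C n s w -> P w.
  by move=> u Vu; apply: (HP _ (into u Vu)).2.
have injV := lin_inj lin Vsub inj.
move=> w Hw; apply: Hw.
  split.
  - split; first by move=> W [W0 _ _] _.
    move=> u Vu e; rewrite (injV _ _ Vu V0 (etrans e (esym (lin0 lin)))).
    by apply: big1 => x _; rewrite ffunE mul0r.
  - move=> w1 w2 [s1 H1] [s2 H2]; split.
      by move=> W WS Wg; have [_ WD _] := WS; apply: WD; [apply: s1 | apply: s2].
    move=> u Vu e.
    have [u1 V1 e1] := surj _ s1; have [u2 V2 e2] := surj _ s2.
    have e' : u = fadd u1 u2.
      by apply: injV => //; [apply: VD | rewrite linD // e1 e2].
    rewrite e'; under eq_bigr => x _ do rewrite ffunE mulrDl.
    by rewrite big_split /= (H1 u1) ?(H2 u2) ?addr0.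
  - move=> a w1 [s1 H1]; split.
      by move=> W WS Wg; have [_ _ WZ] := WS; apply: WZ; apply: s1.
    move=> u Vu e.
    have [u1 V1 e1] := surj _ s1.
    have e' : u = fscale a u1.
      by apply: injV => //; [apply: VZ | rewrite linZ // e1].
    rewrite e'; under eq_bigr => x _ do rewrite ffunE -mulrA.
    by rewrite -mulr_sumr (H1 u1) ?mulr0.
move=> e [a [b [tab ->]]]; split.
  by move=> W _ Wg; apply: Wg; exists a, b.
move=> u Vu ephi.
have [i Hi] := Hh a b tab.
set t := tperm (a i) (b i).
have Vt : V (rho t u) by apply: VG.
have ert : rho t u = fscale (-1) u.
  apply: injV => //; first by apply: VZ.
  by rewrite eqv ephi linZ // ephi rho_polytabloid.
have ut (x : {set 'I_n}) : u (t @: x) = - u x.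
  have := congr1 (fun f : L2 C n => f x) ert; rewrite !ffunE tpermV => ->.
  by rewrite mulN1r.
set S := \sum_x u x * h x.
have SS : S = - S.
  rewrite {1}/S (reindex_inj (imset_inj (@perm_inj _ t))) /= /S -sumrN.
  by apply: eq_bigr => x _; rewrite ut Hi mulNr.
have h2 : S *+ 2 == 0 by rewrite mulr2n {1}SS addNr.
by move: h2; rewrite mulrn_eq0 /= => /eqP.
Qed.

End Grp.
Unset Implicit Arguments. Set Strict Implicit.
Local Open Scope ring_scope.

Section Aux.
Set Implicit Arguments. Unset Strict Implicit.
Variables (C : numClosedFieldType) (n : nat).

Lemma pigeon s (a b : 'I_s -> 'I_n) (Z : {set 'I_n}) : two_row_tableau a b ->
  (#|Z| < s)%N -> exists i, (a i \notin Z) && (b i \notin Z).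
Proof.
case=> ia ib dab hZ.
case: (boolP [exists i, (a i \notin Z) && (b i \notin Z)]) => [/existsP //| /existsPn H].
exfalso; pose f i := if a i \in Z then a i else b i.
have fZ i : f i \in Z.
  rewrite /f; case: ifP => // ha; have := H i; by rewrite ha /= negbK.
have finj : injective f.
  move=> i j; rewrite /f; case: (a i \in Z); case: (a j \in Z).
  - by move/ia.
  - by move/dab.
  - by move/esym/dab.
  - by move/ib.
have : (s <= #|Z|)%N.
  rewrite -[s in (s <= _)%N]card_ord -(card_imset _ finj); apply: subset_leq_card.
  by apply/subsetP => z /imsetP [i _ ->].
by rewrite leqNgt hZ.
Qed.

Lemma inv_test s (a b : 'I_s -> 'I_n) (Z : {set 'I_n}) : two_row_tableau a b ->
  (#|Z| < s)%N -> exists i, forall x : {set 'I_n},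
    #|tperm (a i) (b i) @: x| = #|x| /\ tperm (a i) (b i) @: x :&: Z = x :&: Z.
Proof.
move=> tab hZ; have [i /andP[ha hb]] := pigeon tab hZ.
exists i => x; split; first by rewrite card_imset //; apply: perm_inj.
apply/setP => j; rewrite !inE; case jZ: (j \in Z); rewrite ?andbF //.
have tj : tperm (a i) (b i) j = j.
  rewrite tpermD //; apply/eqP => e; [move: ha | move: hb]; by rewrite e jZ.
by rewrite -{1}tj mem_imset //; apply: perm_inj.
Qed.

Lemma exists_sub (B : {set 'I_n}) k : (k <= #|B|)%N -> exists A : {set 'I_n}, A \subset B /\ #|A| = k.
Proof.
move=> hk; have pos : (0 < 'C(#|B|, k))%N by rewrite bin_gt0.
rewrite -cards_draws in pos; case/card_gt0P: pos => A; rewrite inE => /andP[sAB /eqP cA].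
by exists A.
Qed.

Lemma ffact_ffp (x : C) k : ffact x k = (ffp C k).[x].
Proof.
rewrite /ffact /ffp horner_prod -(big_mkord xpredT (fun i => x - i%:R)).
by apply: eq_bigr => i _; rewrite hornerXsubC.
Qed.

Lemma ffact_nat m k : ffact (m%:R : C) k = (m ^_ k)%:R.
Proof. by rewrite ffact_ffp ffp_eval. Qed.

Lemma ffact_nat_neq0 m k : (k <= m)%N -> ffact (m%:R : C) k != 0.
Proof. by move=> h; rewrite ffact_nat pnatr_eq0 -lt0n ffact_gt0. Qed.

Lemma prodN_ffact (w s : nat) :
  \prod_(y < s) (- ((w%:R : C) - y%:R)) = (-1) ^+ s * ffact (w%:R : C) s.
Proof.
rewrite (eq_bigr (fun y : 'I_s => (-1) * ((w%:R : C) - y%:R))); last by move=> *; rewrite mulN1r.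
by rewrite big_split /= prodr_const card_ord.
Qed.

Lemma prodT_ffact (w s' : nat) : (w + s'.+1 <= n)%N ->
  \prod_(y < s'.+1) (((n - s')%:R : C) - (w%:R - y%:R)) = ffact ((n - w)%:R : C) s'.+1.
Proof.
move=> h; rewrite /ffact (reindex_inj rev_ord_inj) /=.
apply: eq_bigr => y _; rewrite !natrB; try lia.
  by ring.
by have := ltn_ord y; lia.
Qed.

End Aux.
Unset Implicit Arguments. Set Strict Implicit.
Local Open Scope ring_scope.

Section Main.
Variables (C : numClosedFieldType) (n r1 r2 s' : nat) (V1 V2 : L2 C n -> Prop)
  (Lam : L2 C n -> L2 C n) (p : {poly C}) (g : nat -> C).
Local Notation s := s'.+1.
Hypotheses (h1 : (s <= r1)%N) (h1' : (r1 + s <= n)%N) (h2 : (s <= r2)%N) (h2' : (r2 + s <= n)%N).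
Hypotheses (HV1 : is_L2rs r1 s V1) (HV2 : is_L2rs r2 s V2) (HL : is_Lambda r1 r2 s V1 V2 Lam p).
Hypothesis hg : p \Po (r2%:R%:P - 'X) = \sum_(i < s.+1) g i *: ffp C i.

Let q := \sum_(i < s.+1) g i *: ffp C i.

Lemma qE (k : C) : q.[k] = p.[r2%:R - k].
Proof. by rewrite /q -hg horner_comp !hornerE. Qed.

Lemma pq (x X : {set 'I_n}) : #|x| = r2 -> p.[(#|x :\: X|)%:R] = q.[(#|x :&: X|)%:R].
Proof.
by move=> h; rewrite qE cardsD natrB ?h // -h subset_leq_card ?subsetIl.
Qed.

Lemma finish (a w : nat) : (s <= w)%N -> (w + s <= n)%N ->
  (forall y, (y < s)%N ->
    (\sum_(i < s.+1) (g i * (a ^_ i)%:R / ((n - s') ^_ i)%:R) *: ffp C i).[w%:R - y%:R] = 0) ->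
  q.[a%:R] * ((-1) ^+ s * ffact (w%:R : C) s) = ffact ((n - w)%:R : C) s * q.[0].
Proof.
move=> hsw hwn H.
have := @side C g s a w (n - s') hsw _ H; rewrite prodN_ffact prodT_ffact //.
by apply; lia.
Qed.

Lemma sum_to_root (X0 Z Y : {set 'I_n}) (r : nat) : #|Z| = s' -> [disjoint X0 & Z] ->
  Y \subset Z -> (#|Y| < s)%N -> (s <= r)%N -> (r + s <= n)%N ->
  \sum_(x : {set 'I_n} | (#|x| == r) && (x :&: Z == Y)) q.[(#|x :&: X0|)%:R] = 0 ->
  (\sum_(i < s.+1) (g i * (#|X0| ^_ i)%:R / ((n - s') ^_ i)%:R) *: ffp C i).[r%:R - #|Y|%:R] = 0.
Proof.
move=> cZ dZ sYZ hY hr hrn; rewrite /q sum_eval // ?cZ; try lia.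
move/eqP; rewrite mulf_eq0 pnatr_eq0 => /orP[|/eqP]; first by rewrite -leqn0 leqNgt bin_gt0 => /negP; lia.
by rewrite natrB //; lia.
Qed.

Lemma test_inv (Z Y : {set 'I_n}) (r : nat) : #|Z| = s' ->
  forall a b : 'I_s -> 'I_n, two_row_tableau a b ->
  exists i, forall x : {set 'I_n},
   (fun x : {set 'I_n} => (((#|x| == r) && (x :&: Z == Y))%:R : C)) (tperm (a i) (b i) @: x)
   = (fun x : {set 'I_n} => (((#|x| == r) && (x :&: Z == Y))%:R : C)) x.
Proof.
move=> cZ a b tab; have hZ : (#|Z| < s)%N by rewrite cZ.
have [i Hi] := inv_test tab hZ.
by exists i => x /=; have [-> ->] := Hi x.
Qed.

Lemma constrA y : (y < s)%N ->
  (\sum_(i < s.+1) (g i * (r2 ^_ i)%:R / ((n - s') ^_ i)%:R) *: ffp C i).[r1%:R - y%:R] = 0.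
Proof.
move=> hy.
have [X0 [_ cX0]] : exists A : {set 'I_n}, A \subset (setT : {set 'I_n}) /\ #|A| = r2.
  by apply: exists_sub; rewrite cardsT card_ord; lia.
have [Z [sZ cZ]] : exists A : {set 'I_n}, A \subset (~: X0) /\ #|A| = s'.
  by apply: exists_sub; rewrite cardC' cX0; lia.
have [Y [sYZ cY]] : exists A : {set 'I_n}, A \subset Z /\ #|A| = y.
  by apply: exists_sub; rewrite cZ; lia.
have dZ : [disjoint X0 & Z] by rewrite disjoint_sym disjoints_subset.
have [[[sub1 inv1] _ _] _ iso1] := HV1.
have [_ _ [_ kill] form _] := HL.
pose psi := [ffun x : {set 'I_n} => (((#|x| == r1) && (x :&: Z == Y))%:R : C)].
have orth1 : orth V1 psi.
  move=> u Vu; have H := orth_gen sub1 inv1 iso1 (test_inv Z Y r1 cZ) Vu.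
  rewrite /dotL2.
  transitivity ((\sum_x u x * (((#|x| == r1) && (x :&: Z == Y))%:R : C))^*); last by rewrite H conjC0.
  rewrite rmorph_sum; apply: eq_bigr => x _.
  by rewrite rmorphM /= ffunE conjC_nat mulrC.
have := congr1 (fun f : L2 C n => f X0) (kill psi orth1).
rewrite /= form // ffunE => E.
rewrite -cX0 -cY; apply: (@sum_to_root X0 Z Y r1 cZ dZ sYZ); rewrite ?cY //.
rewrite -[RHS]E big_mkcondr /=; apply: eq_bigr => x hx; rewrite ffunE hx /= (pq X0 x cX0) [X0 :&: x]setIC.
by case: (x :&: Z == Y); rewrite ?mulr1 ?mulr0.
Qed.

Lemma constrB y : (y < s)%N ->
  (\sum_(i < s.+1) (g i * (r1 ^_ i)%:R / ((n - s') ^_ i)%:R) *: ffp C i).[r2%:R - y%:R] = 0.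
Proof.
move=> hy.
have [X1 [_ cX1]] : exists A : {set 'I_n}, A \subset (setT : {set 'I_n}) /\ #|A| = r1.
  by apply: exists_sub; rewrite cardsT card_ord; lia.
have [Z [sZ cZ]] : exists A : {set 'I_n}, A \subset (~: X1) /\ #|A| = s'.
  by apply: exists_sub; rewrite cardC' cX1; lia.
have [Y [sYZ cY]] : exists A : {set 'I_n}, A \subset Z /\ #|A| = y.
  by apply: exists_sub; rewrite cZ; lia.
have dZ : [disjoint X1 & Z] by rewrite disjoint_sym disjoints_subset.
have [[[sub1 inv1] _ _] _ iso1] := HV1.
have [[[sub2 inv2] _ _] _ iso2] := HV2.
have [_ _ [into kill] form _] := HL.
pose hh2 (x : {set 'I_n}) := (((#|x| == r2) && (x :&: Z == Y))%:R : C).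
pose c (x1 : {set 'I_n}) := \sum_(x2 : {set 'I_n}) hh2 x2 * p.[(#|x2 :\: x1|)%:R].
have key (psi : L2 C n) : \sum_(x1 : {set 'I_n} | #|x1| == r1) c x1 * psi x1 = \sum_(x2 : {set 'I_n}) hh2 x2 * Lam psi x2.
  rewrite /c; under eq_bigr => x1 _ do rewrite mulr_suml.
  rewrite exchange_big /=; apply: eq_bigr => x2 _.
  case hx2: (#|x2| == r2).
    rewrite form ?(eqP hx2) // mulr_sumr; apply: eq_bigr => x1 _; by rewrite mulrA.
  by rewrite /hh2 hx2 /= mul0r; apply: big1 => x1 _; rewrite !mul0r.
have cV1 u : V1 u -> \sum_(x1 : {set 'I_n} | #|x1| == r1) c x1 * u x1 = 0.
  move=> Vu; rewrite key -[RHS](orth_gen sub2 inv2 iso2 (test_inv Z Y r2 cZ) (into _ Vu)).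
  by apply: eq_bigr => x _; rewrite mulrC.
pose psi := [ffun x : {set 'I_n} => if #|x| == r1 then (c x)^* else 0].
have orth1 : orth V1 psi.
  move=> u Vu; rewrite /dotL2.
  transitivity ((\sum_(x1 : {set 'I_n} | #|x1| == r1) c x1 * u x1)^*); last by rewrite (cV1 _ Vu) conjC0.
  rewrite rmorph_sum [RHS]big_mkcond /=.
  apply: eq_bigr => x _; rewrite ffunE; case: (#|x| == r1); last by rewrite mul0r.
  by rewrite rmorphM.
have := key psi; rewrite (kill psi orth1).
under [X in X = _ -> _]eq_bigr => x hx do rewrite ffunE hx.
under [X in _ = X -> _]eq_bigr => x _ do rewrite ffunE mulr0.
rewrite big1_eq => /psumr_eq0P H.
have : c X1 == 0.
  rewrite -mul_conjC_eq0; apply/eqP; apply: H; last by rewrite cX1.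
  by move=> x _; rewrite mul_conjC_ge0.
move/eqP => c0.
rewrite -cX1 -cY; apply: (@sum_to_root X1 Z Y r2 cZ dZ sYZ); rewrite ?cY //.
rewrite -[RHS]c0 /c big_mkcond /=; apply: eq_bigr => x _.
rewrite /hh2; case hx: (#|x| == r2); last by rewrite mul0r.
rewrite /= (pq x X1 (eqP hx)).
by case: (x :&: Z == Y); rewrite ?mul1r ?mul0r.
Qed.

Lemma partA : p.[r2%:R] * ffact ((n - r1)%:R : C) s = (-1) ^+ s * ffact (r1%:R : C) s.
Proof.
have := finish r2 r1 h1 h1' constrA.
rewrite !qE subr0 subrr.
have [_ _ _ _ [_ ->]] := HL.
by rewrite mul1r => ->; rewrite mulrC.
Qed.

Lemma partB : p.[r2%:R - r1%:R] * ((-1) ^+ s * ffact (r2%:R : C) s) =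
  ffact ((n - r2)%:R : C) s * p.[r2%:R].
Proof.
by have := finish r1 r2 h2 h2' constrB; rewrite !qE subr0.
Qed.

End Main.

Local Open Scope ring_scope.
Local Open Scope ring_scope.

Theorem mainTheorem5 (C : numClosedFieldType) (n r1 r2 s : nat)
  (V1 V2 : L2 C n -> Prop) (Lam : L2 C n -> L2 C n) (p : {poly C}) :
  (r1 <= n)%N -> (r2 <= n)%N -> (s <= Nbound n r1 r2)%N ->
  is_L2rs r1 s V1 -> is_L2rs r2 s V2 ->
  is_Lambda r1 r2 s V1 V2 Lam p ->
  p.[r2%:R] = (-1) ^+ s * ffact (r1%:R : C) s / ffact ((n - r1)%:R : C) s /\
  p.[r2%:R - r1%:R] =
    ffact (r1%:R : C) s * ffact ((n - r2)%:R : C) s /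
      (ffact ((n - r1)%:R : C) s * ffact (r2%:R : C) s).
Proof.
move=> hr1 hr2 hs HV1 HV2 HL.
have [_ _ _ _ [sp p0]] := HL.
case: s hs HV1 HV2 HL sp p0 => [|s'] hs HV1 HV2 HL sp p0.
  have pc : p = (p`_0)%:P by apply: size1_polyC; rewrite sp.
  have H x : p.[x] = 1 by rewrite pc hornerC; rewrite pc hornerC in p0.
  by rewrite /ffact !big_ord0 !H expr0 !mulr1 divr1.
move: hs; rewrite /Nbound !leq_min => /andP[/andP[a b] /andP[c d]].
have h1' : (r1 + s'.+1 <= n)%N by lia.
have h2' : (r2 + s'.+1 <= n)%N by lia.
have [g hg] : exists g : nat -> C, p \Po (r2%:R%:P - 'X) = \sum_(i < s'.+2) g i *: ffp C i.
  apply: ffp_basis.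
  apply: leq_trans (size_comp_poly_leq _ _) _.
  by rewrite sp -opprB size_polyN size_XsubC /= muln1.
have A := @partA C n r1 r2 s' V1 V2 Lam p g a h1' c h2' HV1 HL hg.
have B := @partB C n r1 r2 s' V1 V2 Lam p g a h1' c h2' HV1 HV2 HL hg.
have FL : ffact ((n - r1)%:R : C) s'.+1 != 0 by apply: ffact_nat_neq0.
have F2 : ffact (r2%:R : C) s'.+1 != 0 by apply: ffact_nat_neq0.
have sg : (-1) ^+ s'.+1 != 0 :> C by rewrite signr_eq0.
have sg2 : (-1) ^+ s'.+1 * (-1) ^+ s'.+1 = 1 :> C.
  by rewrite -exprMn mulrNN mulr1 expr1n.
move: A B sg sg2 FL F2.
move: ((-1) ^+ s'.+1 : C) (ffact (r1%:R : C) s'.+1) (ffact (r2%:R : C) s'.+1)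
  (ffact ((n - r1)%:R : C) s'.+1) (ffact ((n - r2)%:R : C) s'.+1)
  (p.[r2%:R]) (p.[r2%:R - r1%:R]).
move=> S F1 F2 FL Fr x y A B sn0 s2 FLn F2n.
have ex : x = S * F1 / FL by rewrite -A mulfK.
split => //.
have ey : y = Fr * x / (S * F2) by rewrite -B mulfK // mulf_neq0.
rewrite ey ex; field.
by rewrite sn0 FLn F2n.
Qed.
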